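(* For every integer $d\ge3$, $$\lim_{\nu\downarrow0}\frac1\nu\big(\vartheta_{d,\nu}-\vartheta_{d,0}\big)=\frac{d}{2(d-2)^2},\qquad \lim_{\nu\to\infty}\nu\big(1-\vartheta_{d,\nu}\big)=\frac2d,$$ while for every $\nu>0$, $$\lim_{d\to\infty}d\big(1-\vartheta_{d,\nu}\big)=\frac{2}{\nu+2}.$$
   Context: For $d\ge2$ and $\nu\in[0,\infty)$ let $\beta_d=\sqrt{d-1}$, $\rho_d=2\sqrt{d-1}/d$, let $\Delta_{d,\nu}$ be the continued fraction $\Delta_{d,\nu}=\cfrac{1}{a_1-\cfrac{1}{a_2-\cfrac{1}{a_3-\cdots}}}$ with $a_i=\frac{2+i\nu}{\rho_d}$, and define $\vartheta_{d,\nu}=1-\Delta_{d,\nu}/\beta_d$. *)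

(* Defs.v *)
From Stdlib Require Import Reals.
From Coquelicot Require Import Coquelicot.
Open Scope R_scope.

Definition beta_d (d : nat) : R := sqrt (INR d - 1).
Definition rho_d (d : nat) : R := 2 * sqrt (INR d - 1) / INR d.

Definition cf_coef (d : nat) (nu : R) (i : nat) : R := (2 + INR i * nu) / rho_d d.

(* n-level truncation of the continued fraction starting at index i:
   cf_trunc a 0 i = 0,  cf_trunc a (n+1) i = 1 / (a i - cf_trunc a n (i+1)).
   So cf_trunc a n 1 = 1/(a_1 - 1/(a_2 - ... - 1/a_n)). *)
Fixpoint cf_trunc (a : nat -> R) (n i : nat) : R :=
  match n with
  | O => 0
  | S m => 1 / (a i - cf_trunc a m (S i))
  end.

Definition Delta (d : nat) (nu : R) : R :=
  real (Lim_seq (fun n => cf_trunc (cf_coef d nu) n 1%nat)).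

Definition theta (d : nat) (nu : R) : R := 1 - Delta d nu / beta_d d.

(* Main.v *)
Require Import Defs.
From Stdlib Require Import Reals Lra Lia Psatz.
From Coquelicot Require Import Coquelicot.
Open Scope R_scope.

Fixpoint cfs (a : nat -> R) (z : R) (n i : nat) : R :=
  match n with
  | O => z
  | S m => 1 / (a i - cfs a z m (S i))
  end.

Lemma cf_trunc_cfs a n : forall i, cf_trunc a n i = cfs a 0 n i.
Proof. induction n; intros; simpl; auto. rewrite IHn; auto. Qed.

Lemma div1_le (D1 D2 : R) : 0 < D1 -> D1 <= D2 -> 1/D2 <= 1/D1.
Proof. intros. unfold Rdiv; rewrite !Rmult_1_l; apply Rinv_le_contravar; lra. Qed.

Definition uu (x : R) := / (1 - x*x).
Definition GG (x : R) (i : nat) := x*x*uu x*INR i + (x*x)^2*(uu x)^2.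
Definition Fa x := (1/x) * (x*x)^2 * (uu x)^3.
Definition Fb x := uu x * (2*(x*x)*Fa x + 2*(1/x)*(x*x)^3*(uu x)^3).
Definition Fc x := uu x * ((x*x)*(Fa x + Fb x) + (1/x)*(x*x)^4*(uu x)^4).
Definition FF (x : R) (i : nat) := Fa x * INR i ^ 2 + Fb x * INR i + Fc x.
Definition Tb x := (x*x)^2*(uu x)^2 + x*x*uu x * x / (1 - x).
Definition TT (x : R) (n i : nat) := x ^ n * (x*x*uu x*INR i + Tb x).

Section Gen.
Variable x : R.
Hypothesis Hx0 : 0 < x.
Hypothesis Hx1 : x < 1.

Lemma uu_pos : 1 <= uu x.
Proof. unfold uu. rewrite <- Rinv_1. apply Rinv_le_contravar; nra. Qed.

Lemma GG_rec i : GG x i = x*x*(INR i + GG x (S i)).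
Proof. unfold GG, uu. rewrite S_INR. field. nra. Qed.

Lemma FF_rec i : FF x i = x*x*FF x (S i) + GG x i ^ 2 / x.
Proof. unfold FF, Fc, Fb, Fa, GG, uu. rewrite S_INR. field. split; nra. Qed.

Lemma GG_pos i : 0 <= GG x i.
Proof. unfold GG. pose proof uu_pos. pose proof (pos_INR i).
  assert (0 <= x*x) by nra. assert (0 <= x*x*uu x) by nra.
  assert (0 <= x*x*uu x * INR i) by nra. assert (0 <= (x*x)^2*(uu x)^2) by (apply Rmult_le_pos; apply pow2_ge_0).
  lra. Qed.

Lemma FF_pos i : 0 <= FF x i.
Proof. unfold FF, Fc, Fb, Fa. pose proof uu_pos. pose proof (pos_INR i).
  set (u := uu x) in *. set (q := x*x).
  assert (0 < q) by (unfold q; nra).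
  assert (0 < 1/x) by (apply Rdiv_lt_0_compat; lra).
  assert (0 <= 1/x*q^2*u^3) by (apply Rmult_le_pos; [apply Rmult_le_pos|]; try apply pow_le; lra).
  set (a2 := 1/x*q^2*u^3) in *.
  assert (0 <= 1/x*q^3*u^3) by (apply Rmult_le_pos; [apply Rmult_le_pos|]; try apply pow_le; lra).
  assert (0 <= u * (2*q*a2 + 2*(1/x)*q^3*u^3)).
  { apply Rmult_le_pos; [lra|]. assert (0 <= q*a2) by nra. nra. }
  set (b1 := u * (2*q*a2 + 2*(1/x)*q^3*u^3)) in *.
  assert (0 <= 1/x*q^4*u^4) by (apply Rmult_le_pos; [apply Rmult_le_pos|]; try apply pow_le; lra).
  assert (0 <= u * (q*(a2+b1) + 1/x*q^4*u^4)).
  { apply Rmult_le_pos; [lra|]. assert (0 <= q*(a2+b1)) by nra. nra. }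
  assert (0 <= a2 * INR i ^2) by (apply Rmult_le_pos; [lra| apply pow2_ge_0]).
  assert (0 <= b1 * INR i) by nra.
  lra. Qed.

Lemma Tb_ge : (x*x)^2*(uu x)^2 <= Tb x.
Proof. unfold Tb. pose proof uu_pos.
  assert (0 <= x*x*uu x*x/(1-x)). { apply Rdiv_le_0_compat; [|lra]. assert (0<=x*x) by nra. assert (0 <= x*x*uu x) by nra. nra. }
  lra. Qed.

Lemma TT_rec n i : x*x*TT x n (S i) <= TT x (S n) i.
Proof. unfold TT, Tb. rewrite S_INR. replace (x ^ S n) with (x * x^n) by reflexivity. pose proof uu_pos. pose proof (pos_INR i).
  set (u := uu x) in *. set (xn := x^n). assert (0 <= xn) by (apply pow_le; lra).
  assert (Hk : x*x*u*x/(1-x) * (x - x*x) = x*x*x*x*u) by (field; lra).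
  set (w := x*x*u*x/(1-x)) in *.
  assert (0<=x*x) by nra. assert (0 <= x*x*u) by (apply Rmult_le_pos; lra).
  assert (0 <= x*x*u*INR i) by (apply Rmult_le_pos; lra).
  assert (0 <= (x*x)^2*u^2) by (apply Rmult_le_pos; apply pow2_ge_0).
  assert (0 <= w). { unfold w; apply Rdiv_le_0_compat; [|lra]. nra. }
  assert (HH1: x*x*(x*x*u*(INR i + 1) + ((x*x)^2*u^2 + w)) <= x*(x*x*u*INR i + ((x*x)^2*u^2 + w))).
  { assert (0 <= (x - x*x) * (x*x*u*INR i)) by (apply Rmult_le_pos; nra).
    assert (0 <= (x - x*x) * ((x*x)^2*u^2)) by (apply Rmult_le_pos; nra).
    nra. }
  assert (xn * (x*x*(x*x*u*(INR i + 1) + ((x*x)^2*u^2 + w))) <= xn * (x*(x*x*u*INR i + ((x*x)^2*u^2 + w)))) by (apply Rmult_le_compat_l; auto).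
  match goal with |- ?L <= ?R => assert (L = xn * (x*x*(x*x*u*(INR i + 1) + ((x*x)^2*u^2 + w)))) by ring;
     assert (R = xn * (x*(x*x*u*INR i + ((x*x)^2*u^2 + w)))) by ring end.
  lra. Qed.
End Gen.
Lemma eps_le L B C z : 0 <= C -> 0 <= z < 1 -> (forall n, L <= B + C*z^n) -> L <= B.
Proof. intros HC Hz H. destruct (Rle_dec L B) as [|Hn]; auto. exfalso.
  assert (Hd: 0 < (L - B)/(C+1)) by (apply Rdiv_lt_0_compat; lra).
  assert (Rabs z < 1) by (rewrite Rabs_right; lra).
  destruct (pow_lt_1_zero z H0 _ Hd) as [N HN]. specialize (HN N (le_n _)).
  assert (0 <= z^N) by (apply pow_le; lra). rewrite Rabs_right in HN by lra.
  specialize (H N). assert (C*z^N <= (C+1)*z^N) by nra.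
  assert (HX: (C+1)*z^N < (C+1)*((L-B)/(C+1))) by (apply Rmult_lt_compat_l; lra).
  replace ((C+1)*((L-B)/(C+1))) with (L-B) in HX by (field; lra). lra. Qed.

Lemma eps_ge L B C z : 0 <= C -> 0 <= z < 1 -> (forall n, B - C*z^n <= L) -> B <= L.
Proof. intros HC Hz H. assert (-L <= -B). { apply (eps_le (-L) (-B) C z); auto. intros n. specialize (H n). lra. } lra. Qed.

Section Gen2.
Variable a : nat -> R.
Variables A x k : R.
Hypothesis Ha : forall i, a i = A + INR i * k.
Hypothesis Hx0 : 0 < x.
Hypothesis Hx1 : x < 1.
Hypothesis HAx : x * (A - x) = 1.
Hypothesis Hk : 0 <= k.

Lemma HA : A = x + 1/x.
Proof. apply (Rmult_eq_reg_l x); [|lra]. field_simplify; [|lra]. nra. Qed.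

Lemma den_ge i t : t <= x -> 1/x <= a i - t.
Proof. intros. rewrite Ha, HA. assert (0 <= INR i * k) by (apply Rmult_le_pos; auto using pos_INR). lra. Qed.

Lemma invx_pos : 0 < 1/x.
Proof. apply Rdiv_lt_0_compat; lra. Qed.

Lemma step_bounds i t : 0 <= t <= x -> 0 < 1/(a i - t) <= x.
Proof. intros. pose proof (den_ge i t (proj2 H)). pose proof invx_pos. split.
  - apply Rdiv_lt_0_compat; lra.
  - eapply Rle_trans; [apply div1_le with (D1 := 1/x); lra | right; field; lra]. Qed.

Lemma cfs_bounds z : 0 <= z <= x -> forall n i, 0 <= cfs a z n i <= x.
Proof. intros Hz n. induction n; intros i; simpl; auto.
  pose proof (step_bounds i _ (IHn (S i))). lra. Qed.

Lemma cfs_mono z z' : 0 <= z <= x -> 0 <= z' <= x -> z <= z' -> forall n i, cfs a z n i <= cfs a z' n i.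
Proof. intros Hz Hz' Hzz n. induction n; intros i; simpl; auto.
  pose proof (cfs_bounds z' Hz' n (S i)). pose proof (den_ge i _ (proj2 H)). pose proof invx_pos.
  apply div1_le; [lra|]. specialize (IHn (S i)). lra. Qed.

Lemma cfs0_incr n : forall i, cfs a 0 n i <= cfs a 0 (S n) i.
Proof. induction n; intros i.
  - simpl. pose proof (step_bounds i 0). lra.
  - change (1/(a i - cfs a 0 n (S i)) <= 1/(a i - cfs a 0 (S n) (S i))).
    assert (Hb: 0 <= 0 <= x) by lra.
    pose proof (cfs_bounds 0 Hb (S n) (S i)). pose proof (den_ge i _ (proj2 H)). pose proof invx_pos.
    apply div1_le; [lra|]. specialize (IHn (S i)). lra. Qed.

Lemma cfsx_decr n : forall i, cfs a x (S n) i <= cfs a x n i.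
Proof. induction n; intros i.
  - simpl. pose proof (step_bounds i x). lra.
  - change (1/(a i - cfs a x (S n) (S i)) <= 1/(a i - cfs a x n (S i))).
    assert (Hb: 0 <= x <= x) by lra.
    pose proof (cfs_bounds x Hb n (S i)). pose proof (den_ge i _ (proj2 H)). pose proof invx_pos.
    apply div1_le; [lra|]. specialize (IHn (S i)). lra. Qed.

Lemma cfs0_le n p i : (n <= p)%nat -> cfs a 0 n i <= cfs a 0 p i.
Proof. induction 1. lra. pose proof (cfs0_incr m i). lra. Qed.

Lemma cfsx_le n p i : (n <= p)%nat -> cfs a x p i <= cfs a x n i.
Proof. induction 1. lra. pose proof (cfsx_decr m i). lra. Qed.

Lemma cfs_0x n m i : cfs a 0 n i <= cfs a x m i.
Proof. pose proof (cfs0_le n (Nat.max n m) i (Nat.le_max_l _ _)).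
  pose proof (cfsx_le m (Nat.max n m) i (Nat.le_max_r _ _)).
  assert (cfs a 0 (Nat.max n m) i <= cfs a x (Nat.max n m) i) by (apply cfs_mono; lra).
  lra. Qed.

Lemma key_id i t : t <= x -> x - 1/(a i - t) = x * (1/(a i - t)) * (INR i * k + (x - t)).
Proof. intros. pose proof (den_ge i t H). pose proof invx_pos.
  assert (0 <= INR i * k) by (apply Rmult_le_pos; auto using pos_INR).
  assert (0 <= x*(x - t + INR i*k)) by (apply Rmult_le_pos; lra).
  rewrite Ha. rewrite HA. field. split; lra. Qed.

Definition Lc := real (Lim_seq (fun n => cf_trunc a n 1)).

Lemma Lc_lim : is_lim_seq (fun n => cf_trunc a n 1) Lc.
Proof. unfold Lc.
  assert (ex_finite_lim_seq (fun n => cf_trunc a n 1)).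
  { apply ex_finite_lim_seq_incr with x.
    - intros n. rewrite !cf_trunc_cfs. apply cfs0_incr.
    - intros n. rewrite cf_trunc_cfs. assert (Hb: 0 <= 0 <= x) by lra. apply (cfs_bounds 0 Hb). }
  pose proof (Lim_seq_correct' _ H).
  destruct H as [l Hl]. rewrite (is_lim_seq_unique _ _ Hl) in *. simpl. exact Hl. Qed.

Lemma Lc_ge n : cfs a 0 n 1 <= Lc.
Proof. rewrite <- cf_trunc_cfs. apply (is_lim_seq_incr_compare (fun n => cf_trunc a n 1)). apply Lc_lim.
  intros m. rewrite !cf_trunc_cfs. apply cfs0_incr. Qed.

Lemma Lc_le m : Lc <= cfs a x m 1.
Proof. assert (Rbar_le Lc (cfs a x m 1)).
  { apply is_lim_seq_le with (u := fun n => cf_trunc a n 1) (v := fun _ => cfs a x m 1).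
    - intros n. rewrite cf_trunc_cfs. apply cfs_0x.
    - apply Lc_lim.
    - apply is_lim_seq_const. }
  exact H. Qed.

Lemma E1 n : forall i, x - cfs a 0 n i <= k * GG x i + (x*x)^n * x.
Proof. induction n; intros i; simpl.
  - pose proof (GG_pos x Hx0 Hx1 i). assert (0 <= k * GG x i) by (apply Rmult_le_pos; auto). lra.
  - assert (Hb: 0 <= 0 <= x) by lra. pose proof (cfs_bounds 0 Hb n (S i)) as B.
    set (t := cfs a 0 n (S i)) in *. pose proof (step_bounds i t B) as C.
    rewrite key_id by lra. set (c := 1/(a i - t)) in *.
    specialize (IHn (S i)). fold t in IHn.
    assert (0 <= INR i * k) by (apply Rmult_le_pos; auto using pos_INR).
    assert (x * c * (INR i * k + (x - t)) <= x * x * (INR i * k + (x - t))).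
    { apply Rmult_le_compat_r; [lra|]. apply Rmult_le_compat_l; lra. }
    assert (x*x*(INR i * k + (x - t)) <= x*x*(INR i * k + (k * GG x (S i) + (x*x)^n * x))).
    { apply Rmult_le_compat_l; [nra|lra]. }
    rewrite (GG_rec x Hx0 Hx1 i). 
    match goal with |- _ <= ?R => assert (R = x*x*(INR i * k + (k * GG x (S i) + (x*x)^n * x))) by ring end.
    lra. Qed.

Lemma E2 n : forall i, 0 <= x - cfs a x n i <= k * GG x i.
Proof. induction n; intros i; simpl.
  - pose proof (GG_pos x Hx0 Hx1 i). assert (0 <= k * GG x i) by (apply Rmult_le_pos; auto). lra.
  - assert (Hb: 0 <= x <= x) by lra. pose proof (cfs_bounds x Hb n (S i)) as B.
    set (t := cfs a x n (S i)) in *. pose proof (step_bounds i t B) as C.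
    rewrite key_id by lra. set (c := 1/(a i - t)) in *.
    specialize (IHn (S i)). fold t in IHn.
    assert (0 <= INR i * k) by (apply Rmult_le_pos; auto using pos_INR).
    split. { apply Rmult_le_pos; [|lra]. apply Rmult_le_pos; lra. }
    assert (x * c * (INR i * k + (x - t)) <= x * x * (INR i * k + (x - t))).
    { apply Rmult_le_compat_r; [lra|]. apply Rmult_le_compat_l; lra. }
    assert (x*x*(INR i * k + (x - t)) <= x*x*(INR i * k + (k * GG x (S i)))).
    { apply Rmult_le_compat_l; [nra|lra]. }
    rewrite (GG_rec x Hx0 Hx1 i).
    match goal with |- _ <= ?R => assert (R = x*x*(INR i * k + (k * GG x (S i)))) by ring end.
    lra. Qed.

Lemma E3 n : forall i, k * GG x i - k^2 * FF x i - k * TT x n i <= x - cfs a x n i.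
Proof. induction n; intros i.
  - simpl cfs. pose proof (FF_pos x Hx0 Hx1 i). unfold TT. simpl pow.
    pose proof (Tb_ge x Hx0 Hx1). unfold GG.
    assert (0 <= k^2 * FF x i) by (apply Rmult_le_pos; auto; apply pow2_ge_0).
    assert (k * (x * x * uu x * INR i + (x * x) ^ 2 * uu x ^ 2) <= k * (1 * (x * x * uu x * INR i + Tb x))) 
      by (apply Rmult_le_compat_l; lra).
    lra.
  - change (cfs a x (S n) i) with (1 / (a i - cfs a x n (S i))).
    assert (Hb: 0 <= x <= x) by lra. pose proof (cfs_bounds x Hb n (S i)) as B.
    pose proof (E2 (S n) i) as E2i. simpl cfs in E2i.
    pose proof (E2 n (S i)) as E2s.
    set (t := cfs a x n (S i)) in *. pose proof (step_bounds i t B) as C.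
    pose proof (key_id i t (proj2 B)) as K.
    set (c := 1/(a i - t)) in *.
    specialize (IHn (S i)). fold t in IHn.
    assert (0 <= INR i * k) by (apply Rmult_le_pos; auto using pos_INR).
    assert (K2 : x - c = x*x*(INR i * k + (x - t)) - x*(x - c)*(INR i * k + (x - t))) by (rewrite K at 1; ring).
    assert (M1 : x*(x - c)*(INR i * k + (x - t)) <= x*(k * GG x i)*(INR i * k + k * GG x (S i))).
    { apply Rmult_le_compat; try lra.
      - apply Rmult_le_pos; lra.
      - apply Rmult_le_compat_l; lra. }
    assert (M2 : x*(k * GG x i)*(INR i * k + k * GG x (S i)) = k^2 * GG x i ^ 2 / x).
    { assert (GG x i ^2 = GG x i * (x*x*(INR i + GG x (S i)))) by (rewrite <- (GG_rec x Hx0 Hx1 i); ring).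
      rewrite H0. field. lra. }
    assert (M3 : x*x*(INR i * k + (x - t)) >= x*x*(INR i * k + (k * GG x (S i) - k^2 * FF x (S i) - k * TT x n (S i)))).
    { apply Rle_ge. apply Rmult_le_compat_l; [nra|lra]. }
    pose proof (TT_rec x Hx0 Hx1 n i) as TR.
    pose proof (FF_rec x Hx0 Hx1 i) as FR.
    pose proof (GG_rec x Hx0 Hx1 i) as GR.
    assert (k * (x*x*TT x n (S i)) <= k * TT x (S n) i) by (apply Rmult_le_compat_l; auto).
    assert (X1: x*x*(INR i * k + (k * GG x (S i) - k^2 * FF x (S i) - k * TT x n (S i))) - k^2 * GG x i ^ 2 / x
        = k * (x*x*(INR i + GG x (S i))) - k^2 * (x*x*FF x (S i) + GG x i ^ 2 / x) - k * (x*x*TT x n (S i))) by (field; lra).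
    rewrite <- GR, <- FR in X1.
    lra. Qed.


Lemma Lc_bounds :
  1/(a 1) <= Lc <= 1/(a 1 - x) /\ x - k*GG x 1 <= Lc <= x - k*GG x 1 + k^2*FF x 1.
Proof. split; [split|split].
  - pose proof (Lc_ge 1). simpl in H. replace (a 1%nat - 0) with (a 1%nat) in H by ring. exact H.
  - apply (Lc_le 1).
  - apply (eps_ge Lc (x - k*GG x 1) x (x*x)); try lra. split; nra.
    intros n. pose proof (E1 n 1). pose proof (Lc_ge n). lra.
  - apply (eps_le Lc (x - k*GG x 1 + k^2*FF x 1) (k*(x*x*uu x*INR 1 + Tb x)) x); try lra.
    + apply Rmult_le_pos; auto. pose proof (uu_pos x Hx0 Hx1). pose proof (Tb_ge x Hx0 Hx1).
      assert (0 <= (x*x)^2*(uu x)^2) by (apply Rmult_le_pos; apply pow2_ge_0).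
      simpl INR. assert (0 <= x*x*uu x) by (apply Rmult_le_pos; nra). nra.
    + intros n. pose proof (E3 n 1). pose proof (Lc_le n). unfold TT in H. 
      match goal with |- _ <= ?R => assert (R = x - k*GG x 1 + k^2*FF x 1 + k * (x^n * (x*x*uu x*INR 1 + Tb x))) by ring end.
      lra.
Qed.
End Gen2.
Lemma conc_facts d : (3 <= d)%nat ->
  let r := sqrt (INR d - 1) in 1 < r /\ INR d = r*r + 1.
Proof. intros Hd r. assert (3 <= INR d) by (apply le_INR in Hd; simpl in Hd; lra).
  assert (Hrr: r*r = INR d - 1) by (apply sqrt_sqrt; lra).
  assert (0 <= r) by apply sqrt_pos. split; nra. Qed.

Lemma conc d nu : (3 <= d)%nat -> 0 <= nu ->
  let r := sqrt (INR d - 1) in let k := nu * INR d / (2*r) in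
  1/(cf_coef d nu 1) <= Defs.Delta d nu <= 1/(cf_coef d nu 1 - 1/r) /\
  1/r - k*GG (1/r) 1 <= Defs.Delta d nu <= 1/r - k*GG (1/r) 1 + k^2*FF (1/r) 1.
Proof. intros Hd Hnu r k. destruct (conc_facts d Hd) as [Hr1 Hdr]. fold r in Hr1, Hdr.
  assert (Ha : forall i, cf_coef d nu i = INR d / r + INR i * k).
  { intros i. unfold cf_coef, rho_d, k. fold r. rewrite Hdr. field. split; nra. }
  assert (Hx0 : 0 < 1/r) by (apply Rdiv_lt_0_compat; lra).
  assert (Hx1 : 1/r < 1). { apply (Rmult_lt_reg_r r); [lra|]. field_simplify; lra. }
  assert (HAx : 1/r * (INR d / r - 1/r) = 1). { rewrite Hdr. field. lra. }
  assert (Hk : 0 <= k). { unfold k. apply Rdiv_le_0_compat; [|lra]. rewrite Hdr. nra. }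
  pose proof (Lc_bounds (cf_coef d nu) (INR d / r) (1/r) k Ha Hx0 Hx1 HAx Hk).
  unfold Lc in H. unfold Defs.Delta. exact H. Qed.

Lemma GGval r : 1 < r -> GG (1/r) 1 = r*r/(r*r-1)^2.
Proof. intros. unfold GG, uu. simpl INR. field. split; nra. Qed.

Lemma ball_R (y e z : R) : ball y e z <-> Rabs (z - y) < e.
Proof. unfold ball; simpl; unfold AbsRing_ball, abs, minus, plus, opp; simpl. reflexivity. Qed.

Lemma div_le_div p q s t : 0 < q -> 0 < t -> p*t <= s*q -> p/q <= s/t.
Proof. intros. assert (p/q = (p*t)*/(q*t)) by (field; lra). assert (s/t = (s*q)*/(q*t)) by (field; lra).
  rewrite H2, H3. apply Rmult_le_compat_r; auto. left. apply Rinv_0_lt_compat. nra. Qed.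

Lemma part1 d : (3<=d)%nat -> filterlim (fun nu => (theta d nu - theta d 0) / nu) (at_right 0)
       (locally (INR d / (2 * (INR d - 2) ^ 2))).
Proof.
  intros Hd. destruct (conc_facts d Hd) as [Hr1 Hdr]. set (r := sqrt (INR d - 1)) in *.
  assert (D0: Defs.Delta d 0 = 1/r).
  { pose proof (conc d 0 Hd (Rle_refl 0)) as C. cbv zeta in C. fold r in C.
    replace (0 * INR d / (2*r)) with 0 in C by (field; lra). lra. }
  set (F1 := FF (1/r) 1).
  assert (HF1 : 0 <= F1).
  { apply FF_pos. apply Rdiv_lt_0_compat; lra. apply (Rmult_lt_reg_r r); [lra|]. field_simplify; lra. }
  set (C := INR d ^2 * F1/(4*r^3)).
  assert (HC : 0 <= C). { unfold C. apply Rdiv_le_0_compat. apply Rmult_le_pos; auto. apply pow2_ge_0.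
    assert (0 < r^3) by (apply pow_lt; lra). lra. }
  apply filterlim_locally. intros eps.
  assert (Hdel: 0 < eps/(C+1)) by (apply Rdiv_lt_0_compat; [apply cond_pos|lra]).
  exists (mkposreal _ Hdel). intros y Hball Hy. unfold ball in Hball; simpl in Hball; unfold AbsRing_ball, abs, minus, plus, opp in Hball; simpl in Hball.
  rewrite Rabs_right in Hball by lra.
  apply ball_R.
  pose proof (conc d y Hd (Rlt_le _ _ Hy)) as Cy. cbv zeta in Cy. fold r in Cy. destruct Cy as [_ [Hlo Hhi]].
  unfold theta, beta_d. fold r. rewrite D0.
  set (Dl := Defs.Delta d y) in *. set (k := y*INR d/(2*r)) in *. fold F1 in Hhi.
  set (G1 := GG (1/r) 1) in *.
  assert (E: (1 - Dl/r - (1 - 1/r/r))/y - (INR d/(2*(INR d-2)^2)) = (1/r - Dl - k*G1)/(r*y)).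
  { unfold G1, k. rewrite GGval by lra. rewrite Hdr. field. repeat split; nra. }
  rewrite E. set (Ee := 1/r - Dl - k*G1).
  assert (E2: -(k^2*F1)/(r*y) = - (y * C)).
  { unfold k, C. rewrite Hdr. field. split; lra. }
  assert (Hry: 0 < r*y) by nra.
  assert (U1: Ee/(r*y) <= 0). { unfold Rdiv. assert (0 < /(r*y)) by (apply Rinv_0_lt_compat; lra). unfold Ee. nra. }
  assert (U2: -(k^2*F1)/(r*y) <= Ee/(r*y)).
  { unfold Rdiv. apply Rmult_le_compat_r. left; apply Rinv_0_lt_compat; lra. unfold Ee. lra. }
  assert (U3: y*C < eps).
  { assert (y*C <= y*(C+1)) by nra.
    assert (y*(C+1) < eps/(C+1)*(C+1)) by (apply Rmult_lt_compat_r; lra).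
    replace (eps/(C+1)*(C+1)) with (pos eps) in H0 by (field; lra). lra. }
  apply Rabs_def1; [pose proof (cond_pos eps); lra | lra].
Qed.

Lemma part2 d : (3<=d)%nat -> filterlim (fun nu => nu * (1 - theta d nu)) (Rbar_locally p_infty)
       (locally (2 / INR d)).
Proof.
  intros Hd. destruct (conc_facts d Hd) as [Hr1 Hdr]. set (r := sqrt (INR d - 1)) in *.
  apply filterlim_locally. intros eps. simpl. pose proof (cond_pos eps) as He.
  exists (4/eps). intros y Hy. apply ball_R.
  assert (Hy0 : 0 < y). { assert (0 < 4/eps) by (apply Rdiv_lt_0_compat; lra). lra. }
  pose proof (conc d y Hd (Rlt_le _ _ Hy0)) as Cy. cbv zeta in Cy. fold r in Cy. destruct Cy as [[Hlo Hhi] _].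
  unfold theta, beta_d. fold r.
  set (Dl := Defs.Delta d y) in *.
  assert (Ha1 : cf_coef d y 1 = (2+y)*(r*r+1)/(2*r)).
  { unfold cf_coef, rho_d. fold r. rewrite Hdr. simpl INR. field. split; nra. }
  rewrite Ha1 in Hlo, Hhi. assert (H3: 3 <= INR d) by (apply le_INR in Hd; simpl in Hd; lra).
  rewrite Hdr in H3 |- *.
  set (dd := r*r+1) in *. assert (Hdd: 3 <= dd) by lra.
  assert (L1: y/r * (1/((2+y)*dd/(2*r))) = 2/dd - 4/(dd*(2+y))) by (field; repeat split; lra).
  assert (L2: y/r * (1/((2+y)*dd/(2*r) - 1/r)) = 2*y/(dd*(2+y) - 2)).
  { field. repeat split; try lra. nra. }
  assert (P1: y/r * (1/((2+y)*dd/(2*r))) <= y*(1 - (1 - Dl/r))).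
  { replace (y*(1 - (1 - Dl/r))) with (y/r*Dl) by (field; lra). apply Rmult_le_compat_l; auto.
    apply Rdiv_le_0_compat; lra. }
  assert (P2: y*(1 - (1 - Dl/r)) <= y/r * (1/((2+y)*dd/(2*r) - 1/r))).
  { replace (y*(1 - (1 - Dl/r))) with (y/r*Dl) by (field; lra). apply Rmult_le_compat_l; auto.
    apply Rdiv_le_0_compat; lra. }
  assert (Q1: 2*y/(dd*(2+y) - 2) <= 2/dd). { apply div_le_div; nra. }
  assert (Q2: 4/(dd*(2+y)) <= 4/y). { apply div_le_div; nra. }
  assert (Q3: 4/y < eps).
  { apply (Rmult_lt_reg_r y); [lra|]. replace (4/y*y) with 4 by (field; lra).
    apply (Rmult_lt_reg_l (/eps)). apply Rinv_0_lt_compat; lra.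
    replace (/eps * (eps*y)) with y by (field; lra). replace (/eps*4) with (4/eps) by (field; lra). lra. }
  apply Rabs_def1; lra.
Qed.

Lemma part3 nu : 0 < nu -> is_lim_seq (fun d : nat => INR d * (1 - theta d nu)) (2 / (nu + 2)).
Proof.
  intros Hnu. apply is_lim_seq_spec. intros eps. pose proof (cond_pos eps) as He.
  assert (H2e : 0 <= 2/eps) by (apply Rdiv_le_0_compat; lra).
  destruct (nfloor_ex (2/eps) H2e) as [N HN].
  exists (Nat.max 3 (S N)). intros n Hn.
  assert (Hd : (3 <= n)%nat) by lia.
  assert (HnN : INR (S N) <= INR n) by (apply le_INR; lia). rewrite S_INR in HnN.
  destruct (conc_facts n Hd) as [Hr1 Hdr]. set (r := sqrt (INR n - 1)) in *.
  pose proof (conc n nu Hd (Rlt_le _ _ Hnu)) as Cy. cbv zeta in Cy. fold r in Cy. destruct Cy as [[Hlo Hhi] _].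
  unfold theta, beta_d. fold r.
  set (Dl := Defs.Delta n nu) in *.
  assert (Ha1 : cf_coef n nu 1 = (2+nu)*(r*r+1)/(2*r)).
  { unfold cf_coef, rho_d. fold r. rewrite Hdr. simpl INR. field. split; nra. }
  rewrite Ha1 in Hlo, Hhi. assert (H3: 3 <= INR n) by (apply le_INR in Hd; simpl in Hd; lra).
  rewrite Hdr in *.
  set (dd := r*r+1) in *. assert (Hdd: 3 <= dd) by lra.
  assert (L1: dd/r * (1/((2+nu)*dd/(2*r))) = 2/(nu+2)) by (field; repeat split; lra).
  assert (L2: dd/r * (1/((2+nu)*dd/(2*r) - 1/r)) = 2/(nu+2) + 4/((2+nu)*((2+nu)*dd-2))).
  { field. repeat split; try lra; nra. }
  assert (P1: dd/r * (1/((2+nu)*dd/(2*r))) <= dd*(1 - (1 - Dl/r))).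
  { replace (dd*(1 - (1 - Dl/r))) with (dd/r*Dl) by (field; lra). apply Rmult_le_compat_l; auto.
    apply Rdiv_le_0_compat; lra. }
  assert (P2: dd*(1 - (1 - Dl/r)) <= dd/r * (1/((2+nu)*dd/(2*r) - 1/r))).
  { replace (dd*(1 - (1 - Dl/r))) with (dd/r*Dl) by (field; lra). apply Rmult_le_compat_l; auto.
    apply Rdiv_le_0_compat; lra. }
  assert (Q1: 4/((2+nu)*((2+nu)*dd-2)) <= 2/dd). { apply div_le_div; nra. }
  assert (Q3: 2/dd < eps).
  { apply (Rmult_lt_reg_r dd); [lra|]. replace (2/dd*dd) with 2 by (field; lra).
    apply (Rmult_lt_reg_l (/eps)). apply Rinv_0_lt_compat; lra.
    replace (/eps * (eps*dd)) with dd by (field; lra). replace (/eps*2) with (2/eps) by (field; lra). lra. }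
  assert (0 < 4/((2+nu)*((2+nu)*dd-2))) by (apply Rdiv_lt_0_compat; nra).
  apply Rabs_def1; lra.
Qed.

Theorem proposition2p8 :
  (forall d : nat, (3 <= d)%nat ->
     filterlim (fun nu => (theta d nu - theta d 0) / nu) (at_right 0)
       (locally (INR d / (2 * (INR d - 2) ^ 2)))
     /\ filterlim (fun nu => nu * (1 - theta d nu)) (Rbar_locally p_infty)
       (locally (2 / INR d)))
  /\
  (forall nu : R, 0 < nu ->
     is_lim_seq (fun d : nat => INR d * (1 - theta d nu)) (2 / (nu + 2))).
Proof.
  split.
  - intros d Hd. split; [apply part1 | apply part2]; auto.
  - apply part3.
Qed.
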